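(* Let $G$ be a finite simple undirected graph, $r<s$ positive integers, and run set-k on $(G,r,s)$. For every positive integer $k$ for which the transition time $t_k$ is defined, the $k$-$(r,s)$-nuclei of $G$ are exactly the sets $\mathcal{L}(C)$, where $C$ ranges over the connected components of the supergraph $\mathcal{G}_{t_k}$ and $\mathcal{L}(C)$ is the set of $K_s$s associated with the links of $C$.
   Context: A $K_r$ is an $r$-clique of $G$. For a set $\mathcal{S}$ of $K_s$s: $K_r(\mathcal{S})$ is the set of $K_r$s contained in some member of $\mathcal{S}$; the $\mathcal{S}$-degree of $R\in K_r(\mathcal{S})$ is the number of $S\in\mathcal{S}$ containing $R$; $R,R'$ are $\mathcal{S}$-connected if there is a sequence $R=R_1,\dots,R_m=R'$ in $K_r(\mathcal{S})$ with each $R_i\cup R_{i+1}$ contained in some $S\in\mathcal{S}$. A $k$-$(r,s)$-nucleus is a set $\mathcal{S}$ of $K_s$s, maximal under inclusion among those such that every $R\in K_r(\mathcal{S})$ has $\mathcal{S}$-degree $\ge k$ and any two members of $K_r(\mathcal{S})$ are $\mathcal{S}$-connected. Procedure set-k$(G,r,s)$: enumerate all $K_r$s and $K_s$s; initialize $\delta(R)$ to the number of $K_s$s containing $R$; all $K_r$s unprocessed. Repeat until all processed: pick an unprocessed $K_r$ $R$ with minimum current $\delta(R)$ (ties arbitrary); set $\kappa(R)=\delta(R)$; for each $K_s$ $S\ni R$ such that no $K_r\subset S$ is processed, and for each $K_r$ $R'\subset S$, $R'\neq R$, with $\delta(R')>\delta(R)$, decrease $\delta(R')$ by 1; mark $R$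 processed. $R_i$ is the $i$-th processed $K_r$; ''time $t$'' is the beginning of the iteration processing $R_t$. The transition time $t_k$ is the unique index with $\kappa(R_{t_k})=k$ and ($t_k=1$ or $\kappa(R_{t_k-1})<k$). $\mathcal{S}_t$ is the set of $K_s$s all of whose $K_r$s are unprocessed at time $t$. The supergraph $\mathcal{G}_t$ is the multigraph with node set $K_r(\mathcal{S}_t)$ in which, for each $S\in\mathcal{S}_t$ and each pair of distinct $K_r$s $R,R'\subset S$, there is a link between $R$ and $R'$ associated with $S$ (so there may be multiple links between two nodes). *)

(* Defs.v *)
From mathcomp Require Import all_boot.
Set Implicit Arguments. Unset Strict Implicit. Unset Printing Implicit Defensive.

Section Nuclei.
Variables (T : finType) (e : rel T) (r s : nat).

Definition clique (A : {set T}) : bool :=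
  [forall x in A, forall y in A, (x != y) ==> e x y].

Definition Kr : {set {set T}} := [set A | clique A && (#|A| == r)].
Definition Ks : {set {set T}} := [set A | clique A && (#|A| == s)].

Definition KrOf (SS : {set {set T}}) : {set {set T}} :=
  [set R in Kr | [exists S in SS, R \subset S]].

Definition sdeg (SS : {set {set T}}) (R : {set T}) : nat :=
  #|[set S in SS | R \subset S]|.

Definition sadj (SS : {set {set T}}) : rel {set T} :=
  fun R R' => (R \in KrOf SS) && (R' \in KrOf SS) &&
              [exists S in SS, (R :|: R') \subset S].

Definition sconnected (SS : {set {set T}}) (R R' : {set T}) : bool :=
  connect (sadj SS) R R'.

Definition nucleus_prop (k : nat) (SS : {set {set T}}) : Prop :=
  SS \subset Ks /\
  (forall R, R \in KrOf SS -> k <= sdeg SS R) /\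
  (forall R R', R \in KrOf SS -> R' \in KrOf SS -> sconnected SS R R').

Definition is_nucleus (k : nat) (SS : {set {set T}}) : Prop :=
  nucleus_prop k SS /\
  (forall SS' : {set {set T}}, SS \subset SS' -> nucleus_prop k SS' -> SS' = SS).

Definition upd (d : {set T} -> nat) (x : {set T}) (v : nat) : {set T} -> nat :=
  fun y => if y == x then v else d y.

(* no K_r contained in S is processed (P = list of processed K_r's) *)
Definition unproc_Ks (P : seq {set T}) (S : {set T}) : bool :=
  [forall R0 in Kr, (R0 \subset S) ==> (R0 \notin P)].

Definition step (P : seq {set T}) (d : {set T} -> nat) (R : {set T})
  : {set T} -> nat :=
  foldl (fun (d1 : {set T} -> nat) (S : {set T}) =>
     if (R \subset S) && unproc_Ks P S then
       foldl (fun (d2 : {set T} -> nat) (R' : {set T}) =>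
          if (R' \subset S) && (R' != R) && (d2 R < d2 R')
          then upd d2 R' (d2 R').-1 else d2) d1 (enum Kr)
     else d1) d (enum Ks).

Definition delta0 (R : {set T}) : nat := #|[set S in Ks | R \subset S]|.

(* o = processing order (o = [:: R_1; R_2; ...], 0-indexed here);
   delta o i = the delta function at "time i", i.e. at the beginning of the
   iteration processing nth set0 o i (after processing take i o) *)
Fixpoint delta (o : seq {set T}) (i : nat) : {set T} -> nat :=
  match i with
  | 0 => delta0
  | i'.+1 => step (take i' o) (delta o i') (nth set0 o i')
  end.

Definition kappa (o : seq {set T}) (i : nat) : nat :=
  delta o i (nth set0 o i).

(* o is the processing order of a legal run of set-k (ties arbitrary) *)
Definition valid_run (o : seq {set T}) : Prop :=
  perm_eq o (enum Kr) /\
  (forall i j, i <= j < size o ->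
     delta o i (nth set0 o i) <= delta o i (nth set0 o j)).

Definition transition_time (o : seq {set T}) (k i : nat) : Prop :=
  i < size o /\ kappa o i = k /\ (i = 0 \/ kappa o i.-1 < k).

Definition St (o : seq {set T}) (i : nat) : {set {set T}} :=
  [set S in Ks | unproc_Ks (take i o) S].

Definition snodes (o : seq {set T}) (i : nat) : {set {set T}} := KrOf (St o i).

(* R and R' are joined by (at least one) link of G_t *)
Definition slink (o : seq {set T}) (i : nat) : rel {set T} :=
  fun R R' => (R \in snodes o i) && (R' \in snodes o i) && (R != R') &&
    [exists S in St o i, (R \subset S) && (R' \subset S)].

(* C is (the node set of) a connected component of G_t *)
Definition is_component (o : seq {set T}) (i : nat) (C : {set {set T}}) : Prop :=
  exists2 R, R \in snodes o i & C = [set R' | connect (slink o i) R R'].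

Definition links_of (o : seq {set T}) (i : nat) (C : {set {set T}})
  : {set {set T}} :=
  [set S in St o i | [exists R in C, exists R' in C,
      [&& R != R', R \in Kr, R' \in Kr, R \subset S & R' \subset S]]].

End Nuclei.

(* Main.v *)
Require Import Defs.
From mathcomp Require Import all_boot zify.
Set Implicit Arguments. Unset Strict Implicit. Unset Printing Implicit Defensive.

Section S.
Variables (T : finType) (e : rel T) (r s : nat).

Definition fin (S R : {set T}) := (fun (d2 : {set T} -> nat) (R' : {set T}) =>
          if (R' \subset S) && (R' != R) && (d2 R < d2 R')
          then upd d2 R' (d2 R').-1 else d2).

Lemma inner_fold S R (l : seq {set T}) : uniq l -> forall (d2 : {set T} -> nat) y,
  foldl (fin S R) d2 l y =
  if [&& y \in l, y \subset S, y != R & d2 R < d2 y] then (d2 y).-1 else d2 y.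
Proof.
elim: l => [|x l IH] /=; first by [].
move=> /andP[xl ul] d2 y; rewrite IH // in_cons.
have eR : fin S R d2 x R = d2 R.
  rewrite /fin; case: ifP => // /andP[/andP[_ xR] _].
  by rewrite /upd eq_sym (negbTE xR).
rewrite eR.
have [->|yx] := eqVneq y x.
  rewrite (negbTE xl) /= /fin -andbA.
  by case: ifP => // _; rewrite /upd eqxx.
have ey : fin S R d2 x y = d2 y.
  by rewrite /fin; case: ifP => // _; rewrite /upd (negbTE yx).
by rewrite ey /=.
Qed.

Definition fout (P : seq {set T}) (R : {set T}) := (fun (d1 : {set T} -> nat) (S : {set T}) =>
     if (R \subset S) && unproc_Ks e r P S then
       foldl (fin S R) d1 (enum (Kr e r))
     else d1).

Lemma step_eq P d R : step e r s P d R = foldl (fout P R) d (enum (Ks e s)).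
Proof. by []. Qed.

Lemma outer_fold (P : seq {set T}) (R R' : {set T}) (l : seq {set T}) : R' \in Kr e r -> R' != R ->
  forall d1 : {set T} -> nat, d1 R <= d1 R' ->
  foldl (fout P R) d1 l R = d1 R /\
  foldl (fout P R) d1 l R' =
   maxn (d1 R' - count (fun S : {set T} => [&& R \subset S, unproc_Ks e r P S & R' \subset S]) l) (d1 R).
Proof.
move=> R'K R'R; elim: l => [|S l IH] d1 le /=; first by split => //; lia.
set d1' := fout P R d1 S.
have e1 : d1' R = d1 R.
  rewrite /d1' /fout; case: ifP => // _.
  by rewrite inner_fold ?enum_uniq // eqxx !andbF.
have e2 : d1' R' = if [&& R \subset S, unproc_Ks e r P S, R' \subset S & d1 R < d1 R']
                   then (d1 R').-1 else d1 R'.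
  rewrite /d1' /fout; case: (R \subset S); case: (unproc_Ks e r P S) => //=.
  by rewrite inner_fold ?enum_uniq // mem_enum R'K R'R /=.
have [IH1 IH2] := IH d1' ltac:(rewrite e1 e2; case: ifP => [/and4P[_ _ _ H]|_]; lia).
rewrite IH1 IH2 e1 e2; split => //.
case: (R \subset S); case: (unproc_Ks e r P S); case: (R' \subset S) => /=;
  try lia; case: ltnP => /= H; lia.
Qed.


Lemma count_enum_set (A : {set {set T}}) (q : pred {set T}) :
  count q (enum A) = #|[set x in A | q x]|.
Proof.
rewrite cardE -size_filter; apply: perm_size; apply: uniq_perm.
- by apply: filter_uniq; apply: enum_uniq.
- by apply: enum_uniq.
by move=> x; rewrite mem_filter !mem_enum inE andbC.
Qed.

Lemma step_val P d (R R' : {set T}) : R' \in Kr e r -> R' != R -> d R <= d R' ->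
  step e r s P d R R' =
  maxn (d R' - #|[set S in Ks e s | [&& R \subset S, unproc_Ks e r P S & R' \subset S]]|) (d R).
Proof.
move=> R'K R'R le; rewrite step_eq; have [_ ->] := outer_fold P (enum (Ks e s)) R'K R'R le.
by rewrite count_enum_set.
Qed.

Lemma clique_sub (A B : {set T}) : A \subset B -> clique e B -> clique e A.
Proof.
move=> AB /forall_inP H; apply/forall_inP => x xA; apply/forall_inP => y yA.
exact: (forall_inP (H x (subsetP AB x xA)) y (subsetP AB y yA)).
Qed.

End S.

Section Main.
Variables (T : finType) (e : rel T) (r s : nat).
Hypotheses (r_pos : 0 < r) (r_lt_s : r < s).
Variable o : seq {set T}.
Hypothesis Ho : valid_run e r s o.

Local Notation KR := (Kr e r).
Local Notation KS := (Ks e s).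

Lemma exists_Kr S : S \in KS -> exists2 R, R \in KR & R \subset S.
Proof.
rewrite inE => /andP[cS /eqP cardS].
exists [set x in take r (enum S)]; last first.
  by apply/subsetP => x; rewrite inE => /mem_take; rewrite mem_enum.
rewrite inE; apply/andP; split.
  apply: clique_sub cS; by apply/subsetP => x; rewrite inE => /mem_take; rewrite mem_enum.
have -> : #|[set x in take r (enum S)]| = #|take r (enum S)| by apply: eq_card => x; rewrite inE.
have /card_uniqP -> := take_uniq r (enum_uniq (mem S)); rewrite size_takel //.
by rewrite -cardE cardS ltnW.
Qed.

Lemma other_Kr S R : S \in KS -> R \in KR -> R \subset S ->
  exists2 R', R' \in KR & (R' \subset S) && (R' != R).
Proof.
rewrite !inE => /andP[cS /eqP cardS] /andP[cR /eqP cardR] RS.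
have : 0 < #|S :\: R|.
  rewrite cardsD (setIidPr RS); lia.
move=> /card_gt0P[x]; rewrite inE => /andP[xR xS].
have : 0 < #|R| by lia.
move=> /card_gt0P[y yR].
have sub : x |: (R :\ y) \subset S.
  rewrite subUset sub1set xS /=; apply: subset_trans RS; exact: subsetDl.
exists (x |: (R :\ y)).
  rewrite inE (clique_sub sub cS) /= cardsU1 !inE negb_and (negbTE xR) orbT /=.
  by rewrite (cardsD1 y R) yR in cardR; apply/eqP; lia.
rewrite sub /=; apply/eqP => E; move: xR; by rewrite -E !inE eqxx.
Qed.

Lemma mem_o x : (x \in o) = (x \in KR).
Proof. by rewrite (perm_mem Ho.1) mem_enum. Qed.

Lemma uniq_o : uniq o.
Proof. by rewrite (perm_uniq Ho.1) enum_uniq. Qed.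

Lemma nth_Kr p : p < size o -> nth set0 o p \in KR.
Proof. by move=> Hp; rewrite -mem_o mem_nth. Qed.

Lemma nth_notin_take p : p < size o -> nth set0 o p \notin take p o.
Proof. by move=> Hp; rewrite in_take ?mem_nth // index_uniq ?uniq_o // ltnn. Qed.

Lemma unproc_index p R : R \in KR -> R \notin take p o ->
  [/\ p <= index R o, index R o < size o & nth set0 o (index R o) = R].
Proof.
move=> RK; rewrite -mem_o in RK; rewrite in_take // -leqNgt => H.
by split => //; [rewrite index_mem | rewrite nth_index].
Qed.

Lemma unproc_rcons P x S : x \in KR ->
  unproc_Ks e r (rcons P x) S = unproc_Ks e r P S && ~~ (x \subset S).
Proof.
move=> xK; apply/forall_inP/andP => [H|[/forall_inP H xS] R0 R0K].
  split.
    apply/forall_inP => R0 R0K; apply/implyP => RS.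
    by have := implyP (H R0 R0K) RS; rewrite mem_rcons in_cons negb_or => /andP[].
  by apply/negP => xS; have := implyP (H x xK) xS; rewrite mem_rcons mem_head.
apply/implyP => RS; rewrite mem_rcons in_cons negb_or (implyP (H R0 R0K) RS) andbT.
by apply/eqP => E; subst; rewrite RS in xS.
Qed.

Lemma St0 : St e r s o 0 = KS.
Proof.
apply/setP => S; rewrite inE /unproc_Ks take0; case: (S \in KS) => //=.
by apply/forall_inP => ? _; rewrite implybT.
Qed.

Lemma St_succ p : p < size o ->
  St e r s o p.+1 = [set S in St e r s o p | ~~ (nth set0 o p \subset S)].
Proof.
move=> Hp; apply/setP => S; rewrite !inE (take_nth set0 Hp) unproc_rcons ?nth_Kr //.
by rewrite andbA.
Qed.

Definition deg p (R : {set T}) := #|[set S in St e r s o p | R \subset S]|.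
Definition mm p := if p is p'.+1 then kappa e r s o p' else 0.

Lemma inv p : p <= size o -> forall R', R' \in KR -> R' \notin take p o ->
  delta e r s o p R' = maxn (deg p R') (mm p).
Proof.
elim: p => [|p IH] Hp R' R'K R'n.
  by rewrite /= /delta0 /deg St0 maxn0.
have Hp' : p < size o by [].
set R := nth set0 o p.
move: R'n; rewrite (take_nth set0 Hp') mem_rcons in_cons negb_or => /andP[R'R R'n].
have RK := nth_Kr Hp'. have Rn := nth_notin_take Hp'.
have [j1 j2 j3] := unproc_index R'K R'n.
have le : delta e r s o p R <= delta e r s o p R'.
  by rewrite -j3; apply: Ho.2; rewrite j1 j2.
rewrite /= -/R step_val // /mm /kappa -/R (IH (ltnW Hp') R') // (IH (ltnW Hp') R) //.
set A := [set S in St e r s o p | R' \subset S].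
set B := [set S in KS | _].
have E1 : A :&: [set S : {set T} | R \subset S] = B.
  apply/setP => S; rewrite !inE.
  by case: (clique e S) (#|S| == s) (R \subset S) (R' \subset S) (unproc_Ks e r (take p o) S) => [] [] [] [] [].
have E2 : deg p.+1 R' = #|A :\: [set S : {set T} | R \subset S]|.
  rewrite /deg St_succ //; apply: eq_card => S; rewrite !inE -/R.
  by case: (clique e S) (#|S| == s) (R \subset S) (R' \subset S) (unproc_Ks e r (take p o) S) => [] [] [] [] [].
have := cardsID [set S : {set T} | R \subset S] A.
rewrite E1 -E2 /deg -/A => E3.
rewrite -E3.
move: (#|B|) (#|[set S in St e r s o p.+1 | R' \subset S]|) (mm p) (#|[set S in St e r s o p | R \subset S]|) => x y z w; lia.
Qed.

Lemma kappa_eq p : p < size o -> kappa e r s o p = maxn (deg p (nth set0 o p)) (mm p).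
Proof.
move=> Hp; rewrite /kappa (inv (ltnW Hp) (nth_Kr Hp) (nth_notin_take Hp)) //.
Qed.

Lemma mm_mono p q : p <= q -> q <= size o -> mm p <= mm q.
Proof.
move=> pq; elim: q pq => [|q IH]; first by rewrite leqn0 => /eqP ->.
rewrite leq_eqVlt => /orP[/eqP -> //| pq] Hq.
apply: leq_trans (IH pq (ltnW Hq)) _.
change (mm q.+1) with (kappa e r s o q).
by rewrite kappa_eq //; apply: leq_maxr.
Qed.

Variables (k i : nat).
Hypotheses (k_pos : 0 < k) (Hi : transition_time e r s o k i).

Lemma mm_lt : mm i < k.
Proof.
case: Hi => _ [_ [H0|Hlt]]; first by rewrite H0.
move: Hlt; case: i => [|i'] Hlt; first by [].
by change (mm i'.+1) with (kappa e r s o i').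
Qed.

Lemma i_lt : i < size o.
Proof. by case: Hi. Qed.

Lemma deg_ge (R : {set T}) : R \in KR -> R \notin take i o -> k <= deg i R.
Proof.
move=> RK Rn; have [j1 j2 j3] := unproc_index RK Rn.
have := Ho.2 i (index R o); rewrite j1 j2 j3 => /(_ isT).
rewrite (inv (ltnW i_lt) RK Rn).
case: Hi => _ [Hk _]; move: Hk; rewrite /kappa => ->.
have := mm_lt; lia.
Qed.

Lemma kappa_before p : p < i -> kappa e r s o p < k.
Proof.
move=> pi; have := mm_lt; have := mm_mono pi (ltnW i_lt).
change (mm p.+1) with (kappa e r s o p); lia.
Qed.

Lemma core (SS : {set {set T}}) : SS \subset KS -> (forall R, R \in KrOf e r SS -> k <= sdeg SS R) ->
  SS \subset St e r s o i.
Proof.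
move=> SSK H.
suff : forall p, p <= i -> SS \subset St e r s o p by apply.
elim => [|p IH] Hp; first by rewrite St0.
have Hp' : p < size o by apply: leq_trans Hp (ltnW i_lt).
rewrite St_succ //; apply/subsetP => S SSS.
rewrite inE (subsetP (IH (ltnW Hp)) S SSS) /=; apply/negP => RS.
set R := nth set0 o p in RS.
have RK : R \in KrOf e r SS.
  by rewrite inE nth_Kr //=; apply/exists_inP; exists S.
have := H R RK.
have le1 : sdeg SS R <= deg p R.
  apply: subset_leq_card; apply/subsetP => S'; rewrite inE => /andP[S'S RS'].
  have := subsetP (IH (ltnW Hp)) S' S'S.
  by rewrite !inE RS' andbT.
have := kappa_before Hp; rewrite kappa_eq // -/R.
lia.
Qed.

Local Notation N := (St e r s o i).
Local Notation slk := (slink e r s o i).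

Lemma KrOf_mono (A B : {set {set T}}) : A \subset B -> KrOf e r A \subset KrOf e r B.
Proof.
move=> AB; apply/subsetP => R; rewrite !inE => /andP[-> /exists_inP[S SA RS]] /=.
by apply/exists_inP; exists S => //; apply: (subsetP AB).
Qed.

Lemma KrOf_N (R : {set T}) : R \in KrOf e r N -> R \in KR /\ R \notin take i o.
Proof.
rewrite inE => /andP[RK /exists_inP[S SN RS]]; split => //.
by move: SN; rewrite inE => /andP[_ /forall_inP H]; exact: (implyP (H R RK) RS).
Qed.

Lemma slink_sym : symmetric slk.
Proof.
have H : forall x y, slk x y -> slk y x.
  move=> x y /andP[/andP[/andP[xn yn] xy] /exists_inP[S SN /andP[xS yS]]].
  rewrite /slink yn xn eq_sym xy /=; apply/exists_inP; exists S => //; by rewrite yS xS.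
by move=> x y; apply/idP/idP; apply: H.
Qed.

Definition Cc (R0 : {set T}) : {set {set T}} := [set R' | connect slk R0 R'].
Definition LL (R0 : {set T}) := links_of e r s o i (Cc R0).

Lemma snodes_of (S R : {set T}) : S \in N -> R \in KR -> R \subset S -> R \in snodes e r s o i.
Proof. by move=> SN RK RS; rewrite /snodes inE RK /=; apply/exists_inP; exists S. Qed.

Lemma memL (R0 S R : {set T}) : S \in N -> R \in Cc R0 -> R \in KR -> R \subset S -> S \in LL R0.
Proof.
move=> SN RC RK RS.
have SK : S \in KS by move: SN; rewrite inE => /andP[].
have [R'' R''K /andP[R''S R''R]] := other_Kr SK RK RS.
have lk : slk R R''.
  rewrite /slink (snodes_of SN RK RS) (snodes_of SN R''K R''S) eq_sym R''R /=.
  by apply/exists_inP; exists S => //; rewrite RS R''S.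
have R''C : R'' \in Cc R0.
  by rewrite inE; apply: connect_trans (connect1 lk); move: RC; rewrite inE.
rewrite /LL /links_of inE SN /=; apply/exists_inP; exists R => //.
apply/exists_inP; exists R'' => //.
by rewrite eq_sym R''R RK R''K RS R''S.
Qed.

Lemma LN (R0 : {set T}) : LL R0 \subset N.
Proof. by apply/subsetP => S; rewrite inE => /andP[]. Qed.

Lemma KrOfL (R0 R : {set T}) : R \in KrOf e r (LL R0) -> R \in Cc R0.
Proof.
rewrite inE => /andP[RK /exists_inP[S SL RS]].
move: SL; rewrite inE => /andP[SN /exists_inP[R1 R1C /exists_inP[R2 R2C /and5P[_ R1K _ R1S _]]]].
have [<-//|R1R] := eqVneq R1 R.
have lk : slk R1 R.
  rewrite /slink (snodes_of SN RK RS) (snodes_of SN R1K R1S) R1R /=.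
  by apply/exists_inP; exists S => //; rewrite RS R1S.
by rewrite inE; apply: connect_trans (connect1 lk); move: R1C; rewrite inE.
Qed.

Lemma transfer (R0 x y : {set T}) : x \in Cc R0 -> connect slk x y -> connect (sadj e r (LL R0)) x y.
Proof.
move=> xC /connectP[p Hp ->]; elim: p x xC Hp => [|z p IH] x xC /=; first by [].
move=> /andP[xz Hp].
have zC : z \in Cc R0.
  by rewrite inE; apply: connect_trans (connect1 xz); move: xC; rewrite inE.
apply: connect_trans (connect1 _) (IH z zC Hp).
move: xz => /andP[/andP[/andP[xn zn] _] /exists_inP[S SN /andP[xS zS]]].
have xK : x \in KR by move: xn; rewrite inE => /andP[].
have zK : z \in KR by move: zn; rewrite inE => /andP[].
have SL := memL SN xC xK xS.
apply/andP; split; first (apply/andP; split).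
- by rewrite inE xK /=; apply/exists_inP; exists S.
- by rewrite inE zK /=; apply/exists_inP; exists S.
by apply/exists_inP; exists S => //; rewrite subUset xS zS.
Qed.

Lemma sadj_slink (SS : {set {set T}}) : SS \subset N -> forall x y, connect (sadj e r SS) x y -> connect slk x y.
Proof.
move=> SSN; apply: connect_sub => x y /andP[/andP[xK yK] /exists_inP[S SS0 xyS]].
have [->|xy] := eqVneq x y; first exact: connect0.
apply: connect1.
have xN := subsetP (KrOf_mono SSN) x xK.
have yN := subsetP (KrOf_mono SSN) y yK.
rewrite /slink /snodes xN yN xy /=; apply/exists_inP; exists S; first exact: (subsetP SSN).
by move: xyS; rewrite subUset.
Qed.

Lemma L_prop (R0 : {set T}) : nucleus_prop e r s k (LL R0).
Proof.
split.
  apply/subsetP => S /(subsetP (LN R0)); by rewrite inE => /andP[].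
split.
  move=> R RL; have RC := KrOfL RL.
  have RN := subsetP (KrOf_mono (LN R0)) R RL.
  have [RK Rn] := KrOf_N RN.
  apply: leq_trans (deg_ge RK Rn) _.
  apply: subset_leq_card; apply/subsetP => S; rewrite inE => /andP[SN RS].
  by rewrite inE RS andbT; exact: memL SN RC RK RS.
move=> R R' RL R'L; have RC := KrOfL RL; have R'C := KrOfL R'L.
apply: (transfer RC).
move: RC R'C; rewrite !inE => RC R'C.
apply: connect_trans R'C; by rewrite (sym_connect_sym slink_sym).
Qed.

Lemma main (SS : {set {set T}}) : is_nucleus e r s k SS <->
    exists2 C, is_component e r s o i C & SS = links_of e r s o i C.
Proof.
split.
  move=> [[SSK [SSdeg SSconn]] SSmax].
  have SSN := core SSK SSdeg.
  case: (set_0Vmem SS) => [E0|[S0 S0SS]].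
    exfalso.
    set R0 := nth set0 o i.
    have R0K := nth_Kr i_lt. have R0n := nth_notin_take i_lt.
    have := deg_ge R0K R0n => dg.
    have : 0 < deg i R0 by apply: leq_trans k_pos dg.
    move=> /card_gt0P[S]; rewrite inE => /andP[SN R0S].
    have SL : S \in LL R0 by apply: memL SN _ R0K R0S; rewrite inE.
    have := SSmax (LL R0); rewrite E0 sub0set => /(_ isT (L_prop R0)) E.
    by move: SL; rewrite E inE.
  have S0K := subsetP SSK S0 S0SS.
  have [R0 R0K R0S0] := exists_Kr S0K.
  have R0n := snodes_of (subsetP SSN S0 S0SS) R0K R0S0.
  have sub : SS \subset LL R0.
    apply/subsetP => S SSS.
    have [R RK RS] := exists_Kr (subsetP SSK S SSS).
    have R0SS : R0 \in KrOf e r SS by rewrite inE R0K /=; apply/exists_inP; exists S0.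
    have RSS : R \in KrOf e r SS by rewrite inE RK /=; apply/exists_inP; exists S.
    have := sadj_slink SSN (SSconn R0 R R0SS RSS) => c.
    by apply: memL (subsetP SSN S SSS) _ RK RS; rewrite inE.
  exists (Cc R0); first by exists R0.
  by symmetry; apply: SSmax sub (L_prop R0).
move=> [C [R0 R0n ->] ->].
split; first exact: (L_prop R0).
move=> SS' LSS' [SS'K [SS'deg SS'conn]].
have SS'N := core SS'K SS'deg.
apply/eqP; rewrite eqEsubset LSS' andbT; apply/subsetP => S SS'S.
have [R RK RS] := exists_Kr (subsetP SS'K S SS'S).
move: R0n; rewrite inE => /andP[R0K /exists_inP[S0 S0N R0S0]].
have S0L : S0 \in LL R0 by apply: memL S0N _ R0K R0S0; rewrite inE.
have R0SS : R0 \in KrOf e r SS' by rewrite inE R0K /=; apply/exists_inP; exists S0 => //; apply: (subsetP LSS').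
have RSS : R \in KrOf e r SS' by rewrite inE RK /=; apply/exists_inP; exists S.
have := sadj_slink SS'N (SS'conn R0 R R0SS RSS) => c.
by apply: memL (subsetP SS'N S SS'S) _ RK RS; rewrite inE.
Qed.

End Main.

Theorem lemma2 (T : finType) (e : rel T)
  (e_sym : symmetric e) (e_irr : irreflexive e)
  (r s : nat) (r_pos : 0 < r) (r_lt_s : r < s)
  (o : seq {set T}) (Ho : valid_run e r s o)
  (k : nat) (k_pos : 0 < k) (i : nat) (Hi : transition_time e r s o k i) :
  forall SS : {set {set T}},
    is_nucleus e r s k SS <->
    exists2 C, is_component e r s o i C & SS = links_of e r s o i C.
Proof. by move=> SS; apply: main. Qed.
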